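(* Let $F:\mathbb R^m\to\mathbb R^r$, $C\in\mathbb R^{r\times n}$ with nonzero columns, $\Theta(x,y)=\frac12\|F(x)-Cy\|^2$, and fix $x$. Consider the double greedy procedure: set $\underline y^0=\mathbf 0$, $\overline y^0=\mathbf 1$; for $k=1,\dots,n$ let $a=\Theta(x,\underline y^{k-1}+\mathbf e_k)-\Theta(x,\underline y^{k-1})$ and $b=\Theta(x,\overline y^{k-1}-\mathbf e_k)-\Theta(x,\overline y^{k-1})$; if $a\ge b$ set $\underline y^k=\underline y^{k-1}+\mathbf e_k$, $\overline y^k=\overline y^{k-1}$, otherwise set $\underline y^k=\underline y^{k-1}$, $\overline y^k=\overline y^{k-1}-\mathbf e_k$; return $\hat y=\underline y^n=\overline y^n$. If $C$ is obtuse, then $\Theta(x,\hat y)\ge\frac13\max_{y\in\{0,1\}^n}\Theta(x,y)$. If $C$ has mutually orthogonal columns, then $\hat y$ is a maximizer of $\Theta(x,\cdot)$ over $\{0,1\}^n$.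
   Context: $C=(c_1,\dots,c_n)$ is obtuse if $c_i^\top c_j\le0$ for all $i\neq j$. $\mathbf e_k$ is the $k$-th standard unit vector, $\mathbf 0,\mathbf 1$ the all-zeros and all-ones vectors in $\mathbb R^n$. *)

(* Defs.v *)
From HB Require Import structures.
From mathcomp Require Import all_boot all_order all_algebra.
Set Implicit Arguments. Unset Strict Implicit. Unset Printing Implicit Defensive.
Import Order.TTheory GRing.Theory Num.Theory.
Local Open Scope ring_scope.

Definition sqnorm (R : realFieldType) (r : nat) (v : 'cV[R]_r) : R :=
  \sum_(i < r) (v i 0) ^+ 2.

Definition Theta (R : realFieldType) (m r n : nat)
  (F : 'cV[R]_m -> 'cV[R]_r) (C : 'M[R]_(r, n)) (x : 'cV[R]_m) (y : 'cV[R]_n) : R :=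
  2^-1 * sqnorm (F x - C *m y).

(* Standard unit vector e_{k+1} (0-based index k). *)
Definition unitv (R : realFieldType) (n k : nat) : 'cV[R]_n :=
  \col_(i < n) (if nat_of_ord i == k then 1 else 0).

Definition coldot (R : realFieldType) (r n : nat) (C : 'M[R]_(r, n)) (i j : 'I_n) : R :=
  \sum_(l < r) C l i * C l j.

Definition obtuse (R : realFieldType) (r n : nat) (C : 'M[R]_(r, n)) : Prop :=
  forall i j : 'I_n, i != j -> coldot C i j <= 0.

Definition orthogonal_cols (R : realFieldType) (r n : nat) (C : 'M[R]_(r, n)) : Prop :=
  forall i j : 'I_n, i != j -> coldot C i j = 0.

Definition nonzero_cols (R : realFieldType) (r n : nat) (C : 'M[R]_(r, n)) : Prop :=
  forall j : 'I_n, col j C != 0.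

Definition binary (R : realFieldType) (n : nat) (y : 'cV[R]_n) : Prop :=
  forall i : 'I_n, y i 0 = 0 \/ y i 0 = 1.

Fixpoint double_greedy (R : realFieldType) (m r n : nat)
  (F : 'cV[R]_m -> 'cV[R]_r) (C : 'M[R]_(r, n)) (x : 'cV[R]_m) (k : nat)
  : 'cV[R]_n * 'cV[R]_n :=
  match k with
  | 0 => (0, const_mx 1)
  | k'.+1 =>
      let p := double_greedy F C x k' in
      let lo := p.1 in let hi := p.2 in
      let e := unitv R n k' in   (* e_k with k = k'+1 *)
      let a := Theta F C x (lo + e) - Theta F C x lo in
      let b := Theta F C x (hi - e) - Theta F C x hi in
      if b <= a then (lo + e, hi) else (lo, hi - e)
  end.

Definition dg_output (R : realFieldType) (m r n : nat)
  (F : 'cV[R]_m -> 'cV[R]_r) (C : 'M[R]_(r, n)) (x : 'cV[R]_m) : 'cV[R]_n :=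
  (double_greedy F C x n).1.

(* Main.v *)
Require Import Defs.
From HB Require Import structures.
From mathcomp Require Import all_boot all_order all_algebra.
From mathcomp Require Import ring lra zify.
Import Order.TTheory GRing.Theory Num.Theory.
Local Open Scope ring_scope.

Section S.
Variables (R : realFieldType) (m r n : nat)
  (F : 'cV[R]_m -> 'cV[R]_r) (C : 'M[R]_(r, n)) (x : 'cV[R]_m).

Local Notation f := (Theta F C x).

Lemma cvB p (a b : 'cV[R]_p) l : (a - b) l 0 = a l 0 - b l 0.
Proof. by rewrite !mxE. Qed.
Lemma cvD p (a b : 'cV[R]_p) l : (a + b) l 0 = a l 0 + b l 0.
Proof. by rewrite !mxE. Qed.

Lemma mul_unitv (k : 'I_n) (l : 'I_r) : (C *m unitv R n k) l 0 = C l k.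
Proof.
rewrite !mxE (bigD1 k) //= !mxE eqxx mulr1 big1 ?addr0 // => j hj.
rewrite mxE val_eqE (negbTE hj) mulr0 //.
Qed.

Lemma marg_diff (k : 'I_n) (u v : 'cV[R]_n) :
  (f (u + unitv R n k) - f u) - (f (v + unitv R n k) - f v)
  = \sum_j (u j 0 - v j 0) * coldot C j k.
Proof.
set e := unitv R n k.
have -> : (f (u + e) - f u) - (f (v + e) - f v)
   = \sum_l ((C *m u) l 0 - (C *m v) l 0) * C l k.
  rewrite /Theta /sqnorm !mulmxDr.
  have hce : forall l, (C *m e) l 0 = C l k by move=> l; exact: mul_unitv.
  move: hce; set cu := C *m u; set cv := C *m v; set ce := C *m e => hce.
  rewrite !mulr_sumr -!sumrB; apply: eq_bigr => l _.
  by rewrite !(cvB, cvD) hce; field.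
rewrite /coldot.
transitivity (\sum_l \sum_j C l j * (u j 0 - v j 0) * C l k).
  apply: eq_bigr => l _; rewrite !mxE -sumrB mulr_suml.
  by apply: eq_bigr => j _; ring.
rewrite exchange_big /=; apply: eq_bigr => j _.
rewrite mulr_sumr; apply: eq_bigr => l _; ring.
Qed.

Definition marg (k : 'I_n) (v : 'cV[R]_n) := f (v + unitv R n k) - f v.

Lemma obtuse_cmp k (u v : 'cV[R]_n) : obtuse C -> (forall j, u j 0 <= v j 0) ->
  u k 0 = v k 0 -> marg k v <= marg k u.
Proof.
move=> hC huv hk; rewrite -subr_ge0 /marg marg_diff; apply: sumr_ge0 => j _.
case: (eqVneq j k) => [->|hjk]; first by rewrite hk subrr mul0r.
apply: mulr_le0; first by rewrite subr_le0.
exact: hC.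
Qed.

Lemma orth_eq k (u v : 'cV[R]_n) : orthogonal_cols C -> u k 0 = v k 0 -> marg k u = marg k v.
Proof.
move=> hC hk; apply/eqP; rewrite -subr_eq0 /marg marg_diff big1 // => j _.
case: (eqVneq j k) => [->|hjk]; first by rewrite hk subrr mul0r.
by rewrite hC // mulr0.
Qed.

Local Notation P k := (double_greedy F C x k).

Lemma P_S k : P k.+1 =
  if f ((P k).2 - unitv R n k) - f (P k).2 <= f ((P k).1 + unitv R n k) - f (P k).1
  then ((P k).1 + unitv R n k, (P k).2) else ((P k).1, (P k).2 - unitv R n k).
Proof. by []. Qed.

Lemma inv k (i : 'I_n) :
  ((i < k)%N -> (P k).1 i 0 = (P k).2 i 0 /\ ((P k).1 i 0 = 0 \/ (P k).1 i 0 = 1))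
  /\ ((k <= i)%N -> (P k).1 i 0 = 0 /\ (P k).2 i 0 = 1).
Proof.
elim: k => [|k [IH1 IH2]]; first by split => //; rewrite !mxE.
have ue : (unitv R n k) i 0 = if (i == k :> nat) then 1 else 0 by rewrite mxE.
rewrite P_S /=; case: ifP => _ /=; rewrite ?(cvB, cvD) ue;
  case: (ltngtP i k) => h.
- rewrite addr0; split => h1; [exact: IH1 | lia].
- rewrite addr0; split => h1; [lia | apply: IH2; lia].
- have [-> ->] := IH2 (eq_leq (esym h)); split => h1; [|lia].
  by rewrite add0r; split; [|right].
- rewrite subr0; split => h1; [exact: IH1 | lia].
- rewrite subr0; split => h1; [lia | apply: IH2; lia].
- have [-> ->] := IH2 (eq_leq (esym h)); split => h1; [|lia].
  by rewrite subrr; split; [|left].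
Qed.

Definition O (y : 'cV[R]_n) k : 'cV[R]_n :=
  \col_(i < n) (if (i < k)%N then (P k).1 i 0 else y i 0).

Lemma step y k (hk : (k < n)%N) : obtuse C -> binary y ->
  f (O y k) - f (O y k.+1) <= (f (P k.+1).1 - f (P k).1) + (f (P k.+1).2 - f (P k).2)
  /\ (orthogonal_cols C -> f (O y k) - f (O y k.+1) <= 0).
Proof.
move=> hC hy.
pose ko := Ordinal hk.
set e := unitv R n k.
have hm : forall v, marg ko v = f (v + e) - f v by [].
have hX : (P k).1 ko 0 = 0 by case: (inv k ko) => _ /(_ (leqnn k)) [].
have hY : (P k).2 ko 0 = 1 by case: (inv k ko) => _ /(_ (leqnn k)) [].
have ue : forall j : 'I_n, e j 0 = if (j == k :> nat) then 1 else 0.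
  by move=> j; rewrite mxE.
have hek : e ko 0 = 1 by rewrite ue eqxx.
have hOk : (O y k) ko 0 = y ko 0 by rewrite mxE ltnn.
have hab : marg ko ((P k).2 - e) <= marg ko (P k).1.
  apply: obtuse_cmp => // [j|]; last by rewrite cvB hek hX hY subrr.
  rewrite cvB ue; have [i1 i2] := inv k j; case: ltngtP => h.
  - by have [-> _] := i1 h; rewrite subr0.
  - by have [-> ->] := i2 (ltnW h); rewrite subr0 ler01.
  - by have [-> ->] := i2 (eq_leq (esym h)); rewrite subrr.
have hb : f ((P k).2 - e) - f (P k).2 = - marg ko ((P k).2 - e).
  by rewrite hm subrK opprB.
rewrite P_S -/e; case: ifP => hba; 
  have m1 := hm (P k).1; case: (hy ko) => hyk.
- (* include, y_k = 0 *)
  have hO : O y k.+1 = O y k + e.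
    apply/matrixP => i j; rewrite (ord1 j) !mxE ltnS P_S -/e hba ?(cvD, cvB) ?ue.
    case: ltngtP => h //; rewrite ?addr0 //.
    have -> : i = ko by apply: val_inj.
    by rewrite hX hyk.
  rewrite hO; have m2 := hm (O y k).
  have h1 : marg ko ((P k).2 - e) <= marg ko (O y k).
    apply: obtuse_cmp => // [j|]; last by rewrite hOk cvB hek hY hyk subrr.
    rewrite cvB ue mxE; have [i1 i2] := inv k j; case: ltngtP => h.
    - by have [-> _] := i1 h; rewrite subr0.
    - by have [_ ->] := i2 (ltnW h); rewrite subr0; case: (hy j) => ->; rewrite ?ler01.
    - have -> : j = ko by apply: val_inj.
      by rewrite hyk hY subrr.
  split; first lra.
  move=> hO2; have := @orth_eq ko (O y k) ((P k).2 - e) hO2.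
  rewrite hOk cvB hek hY hyk subrr => /(_ erefl) => h2.
  have := @orth_eq ko ((P k).1) ((P k).2 - e) hO2.
  rewrite cvB hek hY hX subrr => /(_ erefl) => h3.
  lra.
- (* include, y_k = 1 *)
  have hO : O y k.+1 = O y k.
    apply/matrixP => i j; rewrite (ord1 j) !mxE ltnS P_S -/e hba ?(cvD, cvB) ?ue.
    case: ltngtP => h //; rewrite ?addr0 //.
    have -> : i = ko by apply: val_inj.
    by rewrite hX hyk add0r.
  rewrite hO subrr; split; [lra | by []].
- (* exclude, y_k = 0 *)
  have hO : O y k.+1 = O y k.
    apply/matrixP => i j; rewrite (ord1 j) !mxE ltnS P_S -/e hba ?(cvD, cvB) ?ue.
    case: ltngtP => h //.
    have -> : i = ko by apply: val_inj.
    by rewrite hX hyk.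
  rewrite hO subrr; split; [lra | by []].
- (* exclude, y_k = 1 *)
  have hO : O y k = O y k.+1 + e.
    apply/matrixP => i j; rewrite (ord1 j) !mxE ltnS P_S -/e hba ?(cvD, cvB) ?ue.
    case: ltngtP => h //; rewrite ?addr0 //.
    have -> : i = ko by apply: val_inj.
    by rewrite hX hyk add0r.
  rewrite hO; have m2 := hm (O y k.+1).
  have h1 : marg ko (O y k.+1) <= marg ko (P k).1.
    apply: obtuse_cmp => // [j|]; last first.
      by rewrite mxE ltnSn P_S -/e hba.
    rewrite mxE ltnS P_S -/e hba; have [i1 i2] := inv k j; case: ltngtP => h //.
    by have [-> _] := i2 (ltnW h); case: (hy j) => ->; rewrite ?ler01.
  split; first lra.
  move=> hO2; have := @orth_eq ko (O y k.+1) ((P k).1) hO2.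
  rewrite mxE ltnSn P_S -/e hba => /(_ erefl) => h2.
  have := @orth_eq ko ((P k).1) ((P k).2 - e) hO2.
  rewrite cvB hek hY hX subrr => /(_ erefl) => h3.
  lra.
Qed.

Lemma tele y : obtuse C -> binary y -> forall k, (k <= n)%N ->
  f (O y 0) - f (O y k) <= (f (P k).1 - f (P 0).1) + (f (P k).2 - f (P 0).2)
  /\ (orthogonal_cols C -> f (O y 0) - f (O y k) <= 0).
Proof.
move=> hC hy; elim => [_|k IH hk].
  by rewrite !subrr addr0; split.
have [s1 s2] := @step y k hk hC hy.
have [i1 i2] := IH (ltnW hk).
split; first lra.
move=> ho; have := s2 ho; have := i2 ho; lra.
Qed.

Lemma O0 y : O y 0 = y.
Proof. by apply/matrixP => i j; rewrite (ord1 j) mxE. Qed.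

Lemma On y : O y n = (P n).1.
Proof. by apply/matrixP => i j; rewrite (ord1 j) mxE ltn_ord. Qed.

Lemma Pn : (P n).2 = (P n).1.
Proof.
apply/matrixP => i j; rewrite (ord1 j).
by have [/(_ (ltn_ord i)) [-> _] _] := inv n i.
Qed.

Lemma f_ge0 v : 0 <= f v.
Proof.
rewrite /Theta /sqnorm; apply: mulr_ge0; first by rewrite invr_ge0 ler0n.
by apply: sumr_ge0 => i _; apply: sqr_ge0.
Qed.

End S.

Theorem mainTheorem9 (R : realFieldType) (m r n : nat)
  (F : 'cV[R]_m -> 'cV[R]_r) (C : 'M[R]_(r, n)) (x : 'cV[R]_m) :
  nonzero_cols C ->
  (obtuse C ->
     forall y : 'cV[R]_n, binary y ->
       3^-1 * Theta F C x y <= Theta F C x (dg_output F C x)) /\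
  (orthogonal_cols C ->
     binary (dg_output F C x) /\
     forall y : 'cV[R]_n, binary y ->
       Theta F C x y <= Theta F C x (dg_output F C x)).
Proof.
move=> _; rewrite /dg_output; split.
  move=> hC y hy; have [h _] := @tele _ _ _ _ F C x y hC hy n (leqnn n).
  move: h; rewrite O0 On Pn.
  have := @f_ge0 _ _ _ _ F C x (double_greedy F C x 0).1.
  have := @f_ge0 _ _ _ _ F C x (double_greedy F C x 0).2.
  lra.
move=> ho; have hC : obtuse C by move=> i j hij; rewrite ho.
split.
  by move=> i; have [/(_ (ltn_ord i)) [_ h] _] := @inv _ _ _ _ F C x n i.
move=> y hy; have [_ h] := @tele _ _ _ _ F C x y hC hy n (leqnn n).
move: (h ho); rewrite O0 On; lra.
Qed.
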